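(* Suppose $\Delta(x,\varepsilon)$ is not independent of $x$. Let $r\ge1$ be the smallest index such that $\Delta_r$ is nonconstant, and put $$A(\varepsilon)=\sum_{n<r}\Delta_n\varepsilon^n,$$ a polynomial in $\varepsilon$ with constant coefficients, so that $\Delta(x,\varepsilon)=A(\varepsilon)+\Delta_r(x)\varepsilon^r+o(\varepsilon^r)$. Then, as $\varepsilon\to0$, for each $x$, $${}_qR\big(x,Y(x,\varepsilon),\varepsilon,A(\varepsilon)\big)=\frac{q(q+1)}{2}\,\Delta_r(x)\,\varepsilon^r+o(\varepsilon^r),$$ $${}_qS\big(x,Y(x,\varepsilon),\varepsilon,A(\varepsilon)\big)=q\,\Delta_r(x)\,\varepsilon^r+o(\varepsilon^r).$$
   Context: Fix integers $p$ and $q\ge1$ and put $\mu=2\pi p/q$. Let $f:\mathbb R\to\mathbb R$ be a $2\pi$-periodic real-analytic function. For real parameters $\varepsilon,\delta$ set $g(x)=-\delta-\varepsilon f(x)$ and consider the map $T_{\varepsilon,\delta}(x,y)=(x+y+\mu+g(x),\;y+g(x))$ on $\mathbb R^2$. Define ${}_nR$ and ${}_nS$ by $T^n_{\varepsilon,\delta}(x_0,y_0)=(x_0+n\mu+{}_nR,\;y_0+{}_nS)$. There exist $\bar{\bar\varepsilon},\eta>0$ and real-analytic functions $\Delta(x,\varepsilon)$ and $Y(x,\varepsilon)$, defined for $x\in\mathbb R$ and $|\varepsilon|<\bar{\bar\varepsilon}$ and vanishing at $\varepsilon=0$, such that $(\delta,y)=(\Delta(x,\varepsilon),Y(x,\varepsilon))$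 is the unique solution with $|\delta|,|y|<\eta$ of ${}_qR(x,y,\varepsilon,\delta)={}_qS(x,y,\varepsilon,\delta)=0$. Write $\Delta(x,\varepsilon)=\sum_{n\ge1}\Delta_n(x)\varepsilon^n$. *)

(* Defs.v *)
From Stdlib Require Import Reals.
From Coquelicot Require Import Coquelicot.
Open Scope R_scope.

Definition mu (p : Z) (q : nat) : R := 2 * PI * IZR p / INR q.

Definition Tmap (p : Z) (q : nat) (f : R -> R) (eps delta : R) (z : R * R) : R * R :=
  let g := - delta - eps * f (fst z) in
  (fst z + snd z + mu p q + g, snd z + g).

Definition nR (p : Z) (q : nat) (f : R -> R) (n : nat) (x0 y0 eps delta : R) : R :=
  fst (Nat.iter n (Tmap p q f eps delta) (x0, y0)) - x0 - INR n * mu p q.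

Definition nS (p : Z) (q : nat) (f : R -> R) (n : nat) (x0 y0 eps delta : R) : R :=
  snd (Nat.iter n (Tmap p q f eps delta) (x0, y0)) - y0.

Definition real_analytic (f : R -> R) : Prop :=
  forall x0 : R, exists rho : R, 0 < rho /\ exists a : nat -> R,
    forall x : R, Rabs (x - x0) < rho -> is_pseries a (x - x0) (f x).

Definition real_analytic2 (ebar : R) (F : R -> R -> R) : Prop :=
  forall x0 e0 : R, Rabs e0 < ebar ->
  exists rho : R, 0 < rho /\ exists a : nat -> nat -> R,
    forall x e : R, Rabs (x - x0) < rho -> Rabs (e - e0) < rho -> Rabs e < ebar ->
      (forall i : nat, ex_series (fun j => Rabs (a i j * (x - x0) ^ i * (e - e0) ^ j))) /\
      ex_series (fun i => Series (fun j => Rabs (a i j * (x - x0) ^ i * (e - e0) ^ j))) /\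
      is_series (fun i => Series (fun j => a i j * (x - x0) ^ i * (e - e0) ^ j)) (F x e).

Fixpoint psum (c : nat -> R) (r : nat) (e : R) : R :=
  match r with
  | O => 0
  | S k => psum c k e + c k * e ^ k
  end.

Definition little_o_pow (g : R -> R) (r : nat) : Prop :=
  forall c : R, 0 < c -> exists d : R, 0 < d /\
    forall e : R, 0 < Rabs e < d -> Rabs (g e) <= c * Rabs e ^ r.

(* Main.v *)
Require Import Defs.
From Stdlib Require Import Reals.
From Coquelicot Require Import Coquelicot.
From Stdlib Require Import Lra Lia.
Open Scope R_scope.

Lemma lim0_bounded (u : nat -> R) : is_lim_seq u 0 ->
  exists M, forall n, Rabs (u n) <= M.
Proof.
  intros H. apply is_lim_seq_Reals in H.
  assert (H' : Un_cv (fun n => Rabs (u n)) 0).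
  { intros eps Heps. destruct (H eps Heps) as [N HN]. exists N.
    intros n Hn. specialize (HN n Hn). unfold R_dist in *.
    rewrite Rminus_0_r in *. rewrite Rabs_Rabsolu. exact HN. }
  assert (Hc : Cauchy_crit (fun n => Rabs (u n))).
  { apply CV_Cauchy. exists 0. exact H'. }
  destruct (cauchy_bound _ Hc) as [M HM]. exists M.
  intros n. apply HM. exists n. reflexivity.
Qed.

Lemma radius_ge (a : nat -> R) (rho : R) :
  (forall z, Rabs z < rho -> ex_series (fun n => a n * z ^ n)) ->
  forall z, Rabs z < rho -> Rbar_lt (Rabs z) (CV_radius a).
Proof.
  intros H z Hz.
  set (r := (Rabs z + rho) / 2).
  assert (Hr0 : 0 <= r). { unfold r. pose proof (Rabs_pos z). lra. }
  assert (Hr : Rabs r < rho). { rewrite Rabs_pos_eq by lra. unfold r. lra. }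
  destruct (lim0_bounded _ (ex_series_lim_0 _ (H r Hr))) as [M HM].
  destruct (CV_radius_bounded a) as [Hub _].
  assert (Hle : Rbar_le r (CV_radius a)).
  { apply Hub. exists M. exact HM. }
  destruct (CV_radius a) as [c| |]; simpl in *; auto; unfold r in Hle; lra.
Qed.

Lemma analytic_local (f : R -> R) : real_analytic f -> forall x0,
  exists rho a, 0 < rho /\ forall t, Rabs (t - x0) < rho ->
    Rbar_lt (Rabs (t - x0)) (CV_radius a) /\ f t = PSeries a (t - x0).
Proof.
  intros Hf x0. destruct (Hf x0) as [rho [Hrho [a Ha]]].
  exists rho, a. split; auto. intros t Ht. split.
  - apply (radius_ge a rho); auto. intros z Hz.
    apply ex_pseries_R. assert (H1 := Ha (x0 + z)).
    replace (x0 + z - x0) with z in H1 by ring. exists (f (x0 + z)). apply H1; auto.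
  - symmetry. apply is_pseries_unique. apply Ha. auto.
Qed.

Lemma locally_ball (t x0 rho : R) (P : R -> Prop) : Rabs (t - x0) < rho ->
  (forall s, Rabs (s - x0) < rho -> P s) -> locally t P.
Proof.
  intros Ht HP.
  assert (He : 0 < rho - Rabs (t - x0)) by lra.
  exists (mkposreal _ He). intros s Hs.
  change (Rabs (s - t) < rho - Rabs (t - x0)) in Hs.
  apply HP.
  replace (s - x0) with ((s - t) + (t - x0)) by ring.
  pose proof (Rabs_triang (s - t) (t - x0)). lra.
Qed.

Lemma analytic_deriv (f : R -> R) : real_analytic f ->
  (forall t, ex_derive f t) /\ (forall t, continuity_pt (Derive f) t).
Proof.
  intros Hf.
  assert (Hloc : forall x0, exists rho a, 0 < rho /\ forall t, Rabs (t - x0) < rho ->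
     is_derive f t (PSeries (PS_derive a) (t - x0)) /\
     Rbar_lt (Rabs (t - x0)) (CV_radius (PS_derive a))).
  { intros x0. destruct (analytic_local f Hf x0) as [rho [a [Hrho Ha]]].
    exists rho, a. split; auto. intros t Ht. split.
    - apply is_derive_ext_loc with (f := fun s => PSeries a (s - x0)).
      + apply (locally_ball t x0 rho); auto. intros s Hs. symmetry. apply Ha; auto.
      + assert (Hd : is_derive (fun s : R => s - x0) t 1).
        { auto_derive; auto. }
        pose proof (is_derive_comp (PSeries a) (fun s => s - x0) t _ _
          (is_derive_PSeries a (t - x0) (proj1 (Ha t Ht))) Hd) as Hc.
        replace (PSeries (PS_derive a) (t - x0)) with (scal 1 (PSeries (PS_derive a) (t - x0))). exact Hc. unfold scal; simpl; unfold mult; simpl; ring.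
    - rewrite CV_radius_derive. apply Ha; auto. }
  split.
  - intros t. destruct (Hloc t) as [rho [a [Hrho H]]].
    eexists. apply (H t). rewrite Rminus_diag_eq, Rabs_R0; auto.
  - intros x0. destruct (Hloc x0) as [rho [a [Hrho H]]].
    apply continuity_pt_ext_loc with (f := fun s => PSeries (PS_derive a) (s - x0)).
    + apply (locally_ball x0 x0 rho).
      * rewrite Rminus_diag_eq, Rabs_R0; auto.
      * intros s Hs. symmetry. apply is_derive_unique. apply H; auto.
    + apply (continuity_pt_comp (fun s => s - x0) (PSeries (PS_derive a))).
      * apply continuity_pt_minus. apply continuity_pt_id. apply continuity_pt_const.
        intros u v; reflexivity.
      * apply PSeries_continuity. apply H. rewrite Rminus_diag_eq, Rabs_R0; auto.
Qed.

Lemma analytic_lipschitz (f : R -> R) : real_analytic f ->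
  (forall x, f (x + 2 * PI) = f x) ->
  exists L, 0 <= L /\ forall a b, Rabs (f a - f b) <= L * Rabs (a - b).
Proof.
  intros Hf Hp. destruct (analytic_deriv f Hf) as [Hd Hc].
  set (fd := Derive f).
  assert (Hper : forall t, fd (t + 2 * PI) = fd t).
  { intros t. unfold fd.
    pose proof (Derive_correct f (t + 2 * PI) (Hd _)) as H1.
    assert (Hd2 : is_derive (fun s : R => s + 2 * PI) t 1) by (auto_derive; auto).
    pose proof (is_derive_comp f (fun s => s + 2 * PI) t _ _ H1 Hd2) as H2.
    apply is_derive_ext with (g := f) in H2; [| intros; apply Hp].
    apply is_derive_unique in H2. rewrite H2. unfold scal; simpl; unfold mult; simpl; ring. }
  assert (HperN : forall n t, fd (t + 2 * PI * INR n) = fd t).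
  { induction n; intros t.
    - simpl. f_equal. ring.
    - rewrite S_INR. replace (t + 2 * PI * (INR n + 1)) with ((t + 2 * PI * INR n) + 2 * PI) by ring.
      rewrite Hper. apply IHn. }
  pose proof PI_RGT_0 as Hpi.
  destruct (continuity_ab_maj (fun s => Rabs (fd s)) 0 (2 * PI)) as [Mx [HM _]].
  { lra. }
  { intros c _. apply (continuity_pt_comp fd Rabs). apply Hc. apply Rcontinuity_abs. }
  set (L := Rabs (fd Mx)).
  assert (Hb : forall t, Rabs (fd t) <= L).
  { intros t.
    assert (H0 : 0 <= Rabs t / (2 * PI)).
    { apply Rmult_le_pos. apply Rabs_pos. left. apply Rinv_0_lt_compat. lra. }
    destruct (nfloor_ex _ H0) as [m [_ Hm]].
    set (u := t + 2 * PI * INR (S m)).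
    assert (Hu : 0 <= u).
    { unfold u. rewrite S_INR.
      assert (Rabs t < 2 * PI * (INR m + 1)).
      { apply Rmult_lt_compat_l with (r := 2 * PI) in Hm; [|lra].
        replace (2 * PI * (Rabs t / (2 * PI))) with (Rabs t) in Hm by (field; lra). lra. }
      pose proof (Rle_abs (- t)). rewrite Rabs_Ropp in H1. lra. }
    assert (H0' : 0 <= u / (2 * PI)).
    { apply Rmult_le_pos. lra. left. apply Rinv_0_lt_compat. lra. }
    destruct (nfloor_ex _ H0') as [n [Hn1 Hn2]].
    set (v := u - 2 * PI * INR n).
    assert (Hv : 0 <= v <= 2 * PI).
    { unfold v.
      apply Rmult_le_compat_l with (r := 2 * PI) in Hn1; [|lra].
      apply Rmult_lt_compat_l with (r := 2 * PI) in Hn2; [|lra].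
      replace (2 * PI * (u / (2 * PI))) with u in * by (field; lra). lra. }
    replace (fd t) with (fd v).
    - apply (HM v Hv).
    - unfold v. rewrite <- (HperN n (u - 2 * PI * INR n)).
      replace (u - 2 * PI * INR n + 2 * PI * INR n) with u by ring.
      unfold u. apply HperN. }
  exists L. split. apply Rabs_pos.
  intros a b.
  destruct (MVT_gen f b a fd) as [c [_ Hc2]].
  - intros x _. apply Derive_correct. apply Hd.
  - intros x _. apply continuity_pt_filterlim. exact (ex_derive_continuous (K:=R_AbsRing) (V:=R_NormedModule) f x (Hd x)).
  - rewrite Hc2, Rabs_mult. apply Rmult_le_compat_r. apply Rabs_pos. apply Hb.
Qed.

Lemma iter_pert (p : Z) (q : nat) (f : R -> R) (L : R) :
  0 <= L -> (forall a b, Rabs (f a - f b) <= L * Rabs (a - b)) ->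
  forall n, exists Ca Cb, 0 <= Ca /\ 0 <= Cb /\
  forall x0 y0 e d1 d2, Rabs e <= 1 ->
    Rabs (snd (Nat.iter n (Tmap p q f e d1) (x0, y0)) - snd (Nat.iter n (Tmap p q f e d2) (x0, y0))
          + INR n * (d1 - d2)) <= Cb * Rabs e * Rabs (d1 - d2) /\
    Rabs (fst (Nat.iter n (Tmap p q f e d1) (x0, y0)) - fst (Nat.iter n (Tmap p q f e d2) (x0, y0))
          + INR n * (INR n + 1) / 2 * (d1 - d2)) <= Ca * Rabs e * Rabs (d1 - d2).
Proof.
  intros HL Hf n. induction n as [|n IH].
  - exists 0, 0. split; [lra|split; [lra|]]. intros x0 y0 e d1 d2 _. simpl.
    replace (y0 - y0 + 0 * (d1 - d2)) with 0 by ring.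
    replace (x0 - x0 + 0 * (0 + 1) / 2 * (d1 - d2)) with 0 by field.
    rewrite Rabs_R0. lra.
  - destruct IH as [Ca [Cb [HCa [HCb IH]]]].
    set (K := INR n * (INR n + 1) / 2).
    assert (HK : 0 <= K). { unfold K. pose proof (pos_INR n). nra. }
    set (Cb' := Cb + L * (Ca + K)).
    exists (Ca + Cb'), Cb'.
    assert (HCb' : 0 <= Cb') by (unfold Cb'; nra).
    split; [lra|split; [lra|]].
    intros x0 y0 e d1 d2 He. destruct (IH x0 y0 e d1 d2 He) as [Hb Ha]. fold K in Ha.
    rewrite !Nat.iter_succ.
    destruct (Nat.iter n (Tmap p q f e d1) (x0, y0)) as [a1 b1].
    destruct (Nat.iter n (Tmap p q f e d2) (x0, y0)) as [a2 b2].
    unfold Tmap.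
    cbn [fst snd] in *. rewrite S_INR.
    set (D := d1 - d2) in *.
    assert (Hda : Rabs (a1 - a2) <= (Ca + K) * Rabs D).
    { replace (a1 - a2) with ((a1 - a2 + K * D) - K * D) by ring.
      pose proof (Rabs_triang (a1 - a2 + K * D) (- (K * D))) as T.
      rewrite Rabs_Ropp, Rabs_mult, (Rabs_pos_eq K HK) in T.
      assert (Ca * Rabs e * Rabs D <= Ca * Rabs D).
      { pose proof (Rmult_le_pos _ _ HCa (Rabs_pos D)). pose proof (Rabs_pos e). nra. }
      replace (a1 - a2 + K * D - K * D) with (a1 - a2 + K * D + - (K * D)) by ring. lra. }
    assert (Hfe : Rabs (e * (f a1 - f a2)) <= L * (Ca + K) * Rabs e * Rabs D).
    { rewrite Rabs_mult. pose proof (Hf a1 a2). pose proof (Rabs_pos e).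
      pose proof (Rabs_pos (f a1 - f a2)).
      apply Rle_trans with (Rabs e * (L * Rabs (a1 - a2))). nra.
      apply Rle_trans with (Rabs e * (L * ((Ca + K) * Rabs D))).
      apply Rmult_le_compat_l; auto. apply Rmult_le_compat_l; auto. nra. }
    assert (HB : Rabs (b1 + (- d1 - e * f a1) - (b2 + (- d2 - e * f a2)) + (INR n + 1) * D)
                 <= Cb' * Rabs e * Rabs D).
    { replace (b1 + (- d1 - e * f a1) - (b2 + (- d2 - e * f a2)) + (INR n + 1) * D)
        with ((b1 - b2 + INR n * D) + - (e * (f a1 - f a2))) by (unfold D; ring).
      eapply Rle_trans. apply Rabs_triang. rewrite Rabs_Ropp. unfold Cb'. nra. }
    split; [exact HB|].
    replace (a1 + b1 + mu p q + (- d1 - e * f a1) - (a2 + b2 + mu p q + (- d2 - e * f a2)) +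
             (INR n + 1) * (INR n + 1 + 1) / 2 * D)
      with ((a1 - a2 + K * D) + (b1 + (- d1 - e * f a1) - (b2 + (- d2 - e * f a2)) + (INR n + 1) * D))
      by (unfold K, D; field).
    eapply Rle_trans. apply Rabs_triang. nra.
Qed.

Lemma psum_sum (c : nat -> R) (e : R) n :
  sum_f_R0 (fun k => c k * e ^ k) n = psum c (S n) e.
Proof. induction n. simpl. ring. simpl sum_f_R0. rewrite IHn. simpl. ring. Qed.

Lemma psum_ext (c c' : nat -> R) e r :
  (forall n, (n < r)%nat -> c n = c' n) -> psum c r e = psum c' r e.
Proof.
  induction r; intros H; simpl; auto.
  rewrite IHr by (intros; apply H; lia). rewrite H by lia. reflexivity.
Qed.

Lemma radius_decr_n (a : nat -> R) n : CV_radius (PS_decr_n a n) = CV_radius a.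
Proof.
  induction n. apply CV_radius_ext. intros k. reflexivity.
  rewrite <- IHn, <- (CV_radius_decr_1 (PS_decr_n a n)).
  apply CV_radius_ext. intros k. unfold PS_decr_n, PS_decr_1. f_equal. lia.
Qed.

Lemma little_o_of_bound (g : R -> R) (r : nat) (C d0 : R) : 0 < d0 ->
  (forall e, Rabs e < d0 -> Rabs (g e) <= C * Rabs e * Rabs e ^ r) ->
  little_o_pow g r.
Proof.
  intros Hd0 H c Hc.
  set (C' := Rabs C + 1).
  assert (HC' : 0 < C') by (unfold C'; pose proof (Rabs_pos C); lra).
  exists (Rmin d0 (c / C')). split.
  { apply Rmin_glb_lt; auto. apply Rdiv_lt_0_compat; auto. }
  intros e [He1 He2].
  assert (Hed0 : Rabs e < d0) by (eapply Rlt_le_trans; [exact He2| apply Rmin_l]).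
  assert (Hec : Rabs e < c / C') by (eapply Rlt_le_trans; [exact He2| apply Rmin_r]).
  assert (Hec' : Rabs e * C' < c).
  { apply Rmult_lt_compat_r with (r := C') in Hec; auto.
    replace (c / C' * C') with c in Hec by (field; lra). exact Hec. }
  pose proof (pow_le (Rabs e) r (Rabs_pos e)) as Hp.
  eapply Rle_trans. apply H; auto.
  assert (C <= C') by (unfold C'; pose proof (Rle_abs C); lra).
  assert (C * Rabs e <= c).
  { pose proof (Rabs_pos e). nra. }
  nra.
Qed.

Lemma combine (r : nat) (u K A D Dl e P Cx Kp : R) :
  Rabs e <= 1 -> Rabs P <= Kp -> 0 <= Cx -> 0 <= K ->
  D - A - Dl * e ^ r = e ^ S r * P ->
  Rabs (u + K * (A - D)) <= Cx * Rabs e * Rabs (A - D) ->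
  Rabs (u - K * Dl * e ^ r) <= (Cx * (Rabs Dl + Kp) + K * Kp) * Rabs e * Rabs e ^ r.
Proof.
  intros He HP HCx HK Hid Hu.
  set (E := Rabs e). set (Er := Rabs e ^ r).
  assert (HE : 0 <= E) by apply Rabs_pos.
  assert (HEr : 0 <= Er) by apply pow_le, Rabs_pos.
  assert (Her : Rabs (e ^ r) = Er) by (unfold Er; rewrite RPow_abs; reflexivity).
  assert (HeSr : Rabs (e ^ S r) = E * Er) by (unfold E, Er; rewrite <- RPow_abs; reflexivity).
  assert (HP0 : 0 <= Rabs P) by apply Rabs_pos.
  assert (HAD : Rabs (A - D) <= Rabs Dl * Er + E * Er * Kp).
  { replace (A - D) with (- (Dl * e ^ r + e ^ S r * P)) by lra.
    rewrite Rabs_Ropp. eapply Rle_trans. apply Rabs_triang.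
    rewrite !Rabs_mult, Her, HeSr. apply Rplus_le_compat_l. apply Rmult_le_compat_l; [apply Rmult_le_pos|]; auto. }
  replace (u - K * Dl * e ^ r) with ((u + K * (A - D)) + K * (e ^ S r * P)) by (rewrite <- Hid; ring).
  eapply Rle_trans. apply Rabs_triang.
  rewrite (Rabs_mult K), (Rabs_mult (e ^ S r)), HeSr, (Rabs_pos_eq K HK).
  fold E in Hu.
  assert (H1 : Cx * E * Rabs (A - D) <= Cx * E * (Rabs Dl * Er + E * Er * Kp)).
  { apply Rmult_le_compat_l; nra. }
  assert (H2 : Cx * E * (Rabs Dl * Er + E * Er * Kp) <= Cx * (Rabs Dl + Kp) * E * Er).
  { assert (0 <= Kp) by lra.
    assert (E * E * Er * Kp <= E * Er * Kp).
    { assert (0 <= E * Er * Kp) by (apply Rmult_le_pos; nra). pose proof (Rmult_le_compat_r (E * Er * Kp) E 1 ltac:(assumption) He). nra. }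
    assert (0 <= Rabs Dl) by apply Rabs_pos. nra. }
  assert (H3 : K * (E * Er * Rabs P) <= K * Kp * E * Er).
  { assert (0 <= K * (E * Er)) by (apply Rmult_le_pos; nra). nra. }
  change (E ^ r) with Er. lra.
Qed.

Theorem mainTheorem7
  (p : Z) (q : nat) (f : R -> R)
  (ebar eta : R) (Delta Y : R -> R -> R) (Deltan : nat -> R -> R) (r : nat) :
  (1 <= q)%nat ->
  (forall x : R, f (x + 2 * PI) = f x) ->
  real_analytic f ->
  0 < ebar -> 0 < eta ->
  real_analytic2 ebar Delta ->
  real_analytic2 ebar Y ->
  (forall x : R, Delta x 0 = 0 /\ Y x 0 = 0) ->
  (forall x eps : R, Rabs eps < ebar ->
     Rabs (Delta x eps) < eta /\ Rabs (Y x eps) < eta /\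
     nR p q f q x (Y x eps) eps (Delta x eps) = 0 /\
     nS p q f q x (Y x eps) eps (Delta x eps) = 0 /\
     (forall delta y : R, Rabs delta < eta -> Rabs y < eta ->
        nR p q f q x y eps delta = 0 -> nS p q f q x y eps delta = 0 ->
        delta = Delta x eps /\ y = Y x eps)) ->
  (forall x : R, exists rho : R, 0 < rho /\
     forall e : R, Rabs e < rho -> is_pseries (fun n => Deltan n x) e (Delta x e)) ->
  (exists x1 x2 e : R, Rabs e < ebar /\ Delta x1 e <> Delta x2 e) ->
  (1 <= r)%nat ->
  (exists x1 x2 : R, Deltan r x1 <> Deltan r x2) ->
  (forall n : nat, (n < r)%nat -> forall x1 x2 : R, Deltan n x1 = Deltan n x2) ->
  let A := fun e : R => psum (fun n => Deltan n 0) r e in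
  forall x : R,
    little_o_pow (fun e => nR p q f q x (Y x e) e (A e)
                           - INR q * (INR q + 1) / 2 * Deltan r x * e ^ r) r /\
    little_o_pow (fun e => nS p q f q x (Y x e) e (A e)
                           - INR q * Deltan r x * e ^ r) r.
Proof.
  intros Hq Hper Hf Hebar Heta _ _ _ Hsol Hps _ _ _ Hr2 A x.
  destruct (analytic_lipschitz f Hf Hper) as [L [HL HLip]].
  destruct (iter_pert p q f L HL HLip q) as [Ca [Cb [HCa [HCb Hpert]]]].
  destruct (Hps x) as [rho [Hrho Hs]].
  set (c := fun n => Deltan n x).
  assert (Hrad : forall e, Rabs e < rho -> Rbar_lt (Rabs e) (CV_radius c)).
  { apply radius_ge. intros z Hz. apply ex_pseries_R. eexists. apply (Hs z Hz). }
  set (b := PS_decr_n c (S r)).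
  assert (Hcont : continuity_pt (PSeries b) 0).
  { apply PSeries_continuity. unfold b. rewrite radius_decr_n. apply Hrad.
    rewrite Rabs_R0; auto. }
  destruct (Hcont 1 Rlt_0_1) as [d1 [Hd1 Hcd]].
  set (Kp := Rabs (PSeries b 0) + 1).
  assert (HKp : forall e, Rabs e < d1 -> Rabs (PSeries b e) <= Kp).
  { intros e He.
    destruct (Req_dec e 0) as [->|Hne].
    { unfold Kp. lra. }
    assert (H := Hcd e).
    unfold D_x, no_cond, R_dist in H. simpl in H.
    unfold Rdist in H. rewrite Rminus_0_r in H.
    assert (H' : Rabs (PSeries b e - PSeries b 0) < 1) by (apply H; split; auto).
    unfold Kp. pose proof (Rabs_triang (PSeries b e - PSeries b 0) (PSeries b 0)).
    replace (PSeries b e - PSeries b 0 + PSeries b 0) with (PSeries b e) in H0 by ring. lra. }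
  assert (Hid : forall e, Rabs e < rho ->
     Delta x e - A e - Deltan r x * e ^ r = e ^ S r * PSeries b e).
  { intros e He.
    rewrite <- (is_pseries_unique _ _ _ (Hs e He)). fold c.
    rewrite (PSeries_decr_n c r e (CV_radius_inside c e (Hrad e He))).
    rewrite psum_sum. simpl psum.
    replace (psum c r e) with (A e).
    - fold b. unfold c. ring.
    - unfold A, c. apply psum_ext. intros n Hn. apply (Hr2 n Hn). }
  set (d0 := Rmin (Rmin rho d1) (Rmin 1 ebar)).
  assert (Hd0 : 0 < d0).
  { unfold d0. repeat apply Rmin_glb_lt; auto. lra. }
  assert (Hd0s : forall e, Rabs e < d0 ->
     Rabs e < rho /\ Rabs e < d1 /\ Rabs e <= 1 /\ Rabs e < ebar).
  { intros e He. unfold d0 in He.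
    pose proof (Rmin_l (Rmin rho d1) (Rmin 1 ebar)).
    pose proof (Rmin_r (Rmin rho d1) (Rmin 1 ebar)).
    pose proof (Rmin_l rho d1). pose proof (Rmin_r rho d1).
    pose proof (Rmin_l 1 ebar). pose proof (Rmin_r 1 ebar). lra. }
  pose proof (pos_INR q) as Hq0.
  split.
  - apply (little_o_of_bound _ r (Cb * 0 + (Ca * (Rabs (Deltan r x) + Kp) + INR q * (INR q + 1) / 2 * Kp)) d0 Hd0).
    intros e He. destruct (Hd0s e He) as [H1 [H2 [H3 H4]]].
    replace (Cb * 0 + (Ca * (Rabs (Deltan r x) + Kp) + INR q * (INR q + 1) / 2 * Kp))
      with (Ca * (Rabs (Deltan r x) + Kp) + INR q * (INR q + 1) / 2 * Kp) by ring.
    apply (combine r _ _ (A e) (Delta x e) (Deltan r x) e (PSeries b e) Ca Kp); auto.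
    + apply Rmult_le_pos; [apply Rmult_le_pos|]; lra.
    + destruct (Hsol x e H4) as [_ [_ [HR _]]].
      destruct (Hpert x (Y x e) e (A e) (Delta x e) H3) as [_ Ha].
      unfold nR in HR |- *. 
      replace (fst (Nat.iter q (Tmap p q f e (A e)) (x, Y x e)) - x - INR q * mu p q)
        with (fst (Nat.iter q (Tmap p q f e (A e)) (x, Y x e)) -
              fst (Nat.iter q (Tmap p q f e (Delta x e)) (x, Y x e))) by lra.
      exact Ha.
  - apply (little_o_of_bound _ r (Cb * (Rabs (Deltan r x) + Kp) + INR q * Kp) d0 Hd0).
    intros e He. destruct (Hd0s e He) as [H1 [H2 [H3 H4]]].
    apply (combine r _ _ (A e) (Delta x e) (Deltan r x) e (PSeries b e) Cb Kp); auto.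
    + destruct (Hsol x e H4) as [_ [_ [_ [HS _]]]].
      destruct (Hpert x (Y x e) e (A e) (Delta x e) H3) as [Hb _].
      unfold nS in HS |- *.
      replace (snd (Nat.iter q (Tmap p q f e (A e)) (x, Y x e)) - Y x e)
        with (snd (Nat.iter q (Tmap p q f e (A e)) (x, Y x e)) -
              snd (Nat.iter q (Tmap p q f e (Delta x e)) (x, Y x e))) by lra.
      exact Hb.
Qed.
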